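(* Let $X$ be a Hermitian $d\times d$ matrix of rank $2$. Then $$\frac{24\,\|X\|_1^2\,\mathrm{tr}\big(P_{\mathrm{Sym}^4}X^{\otimes4}\big)}{\big(\|X\|_2^2+\mathrm{tr}(X)^2\big)^3}\le\frac5{81}\big(95+32\sqrt{10}\big)\approx12.1107 .$$ If in addition $\mathrm{tr}(X)=0$, the left-hand side equals $12$.
   Context: $P_{\mathrm{Sym}^4}$ is the orthogonal projector onto the totally symmetric subspace of $(\mathbb{C}^d)^{\otimes 4}$. $\|\cdot\|_1$, $\|\cdot\|_2$ are the trace norm and Hilbert–Schmidt norm. *)

(* Defs.v *)
(* Scalars: an arbitrary numClosedFieldType C (e.g. algC, a model of the complex numbers). *)
From HB Require Import structures.
From mathcomp Require Import all_boot all_order all_algebra all_fingroup.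
Set Implicit Arguments. Unset Strict Implicit. Unset Printing Implicit Defensive.
Import Order.TTheory GRing.Theory Num.Theory.
Local Open Scope ring_scope.

Section QDefs.
Variable C : numClosedFieldType.

Definition adjmx m n (A : 'M[C]_(m, n)) : 'M[C]_(n, m) := (map_mx Num.conj A)^T.

Definition is_hermitian n (X : 'M[C]_n) : Prop := adjmx X = X.

(* Schatten norms: singular values = square roots of the eigenvalues of X^* X
   (X^* X is normal, so spectral_diag gives its eigenvalues with multiplicity). *)
Definition trace_norm n (X : 'M[C]_n) : C :=
  \sum_(i < n) sqrtC ((spectral_diag (adjmx X *m X)) 0 i).

Definition hs_norm n (X : 'M[C]_n) : C := sqrtC (\tr (adjmx X *m X)).

(* (C^d)^{\otimes 4}: basis indexed by multi-indices 'I_4 -> 'I_d. Operators are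
   matrices indexed by this finite type. *)
Definition mi (d : nat) := {ffun 'I_4 -> 'I_d}.

Definition tensor4 d (X : 'M[C]_d) (i j : mi d) : C := \prod_(k < 4) X (i k) (j k).

(* permutation operator W_s : e_{j_1}⊗...⊗e_{j_4} |-> tensor factor k moved to slot s k,
   i.e. <i| W_s |j> = [i = j ∘ s^{-1}] *)
Definition permop d (s : 'S_4) (i j : mi d) : C :=
  (i == [ffun k => j ((s^-1)%g k)])%:R.

Definition PSym4 d (i j : mi d) : C := (4`!%:R)^-1 * \sum_(s : 'S_4) permop s i j.

Definition tr4 d (A B : mi d -> mi d -> C) : C := \sum_(i : mi d) \sum_(j : mi d) A i j * B j i.

Definition trPSym4X4 d (X : 'M[C]_d) : C := tr4 (@PSym4 d) (tensor4 X).

End QDefs.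

(* Main.v *)
Require Import Defs.
From HB Require Import structures.
From mathcomp Require Import all_boot all_order all_algebra all_fingroup.
Import Order.TTheory GRing.Theory Num.Theory.
Local Open Scope ring_scope.
From mathcomp Require Import ring.
Set Implicit Arguments. Unset Strict Implicit. Unset Printing Implicit Defensive.

Section Stab.
Variable T : finType.
Variable A : {set T}.

Definition pstab := [set s : {perm T} | [forall x, (s x \in A) == (x \in A)]].

Lemma restr_inj (s : {perm T}) (B : {set T}) :
  s \in [set s : {perm T} | [forall x, (s x \in B) == (x \in B)]] ->
  injective (fun x => if x \in B then s x else x).
Proof.
rewrite inE => /forallP H x y /=.
have Hx := eqP (H x); have Hy := eqP (H y).
case: ifP => xB; case: ifP => yB.
- exact: perm_inj.
- by move=> e; move: xB; rewrite -Hx e yB.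
- by move=> e; move: yB; rewrite -Hy -e xB.
- by [].
Qed.

Lemma card_pstab : #|pstab| = (#|A|`! * #|~: A|`!)%N.
Proof.
rewrite -!card_perm -(cardsE (perm_on A)) -(cardsE (perm_on (~: A))) -cardsX.
pose f (p : {perm T} * {perm T}) := (p.1 * p.2)%g.
have onAC : forall p, p \in setX [set x in perm_on A] [set x in perm_on (~: A)] ->
    forall x, (x \in A -> f p x = p.1 x) /\ (x \notin A -> f p x = p.2 x).
  case=> u v /setXP[/=]; rewrite !inE => uA vA x; rewrite /f /= permM; split=> xA.
    by rewrite (out_perm vA) // inE negbK perm_closed.
  by rewrite (out_perm uA).
have -> : pstab = f @: setX [set x in perm_on A] [set x in perm_on (~: A)].
  apply/setP=> s; apply/idP/imsetP.
  - move=> sS.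
    have sS' : s \in [set s : {perm T} | [forall x, (s x \in ~: A) == (x \in ~: A)]].
      by move: sS; rewrite !inE => /forallP H; apply/forallP=> x; rewrite !inE (eqP (H x)).
    exists (perm (restr_inj sS), perm (restr_inj sS')).
      rewrite !inE /=; apply/andP; split; apply/subsetP=> x; rewrite inE /= permE;
      by case: ifP => // _; rewrite eqxx.
    apply/permP=> x; rewrite /f permM /= !permE.
    move: sS; rewrite inE => /forallP/(_ x)/eqP Hx.
    by have [xA|xA] := boolP (x \in A); rewrite ?inE ?Hx ?xA //= ?inE ?Hx ?xA.
  - case=> [[u v]] pS ->; rewrite inE; apply/forallP=> x; have [h1 h2] := onAC _ pS x.
    case/setXP: pS; rewrite !inE => uA vA.
    case: (boolP (x \in A)) => xA.
      by rewrite h1 //= (perm_closed x uA) xA.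
    rewrite h2 //; apply/eqP; move: (perm_closed x vA); rewrite !inE => e.
    by apply: negb_inj; rewrite e.
rewrite card_in_imset // => -[u v] [u' v'] pS qS e.
have hp1 := onAC _ pS; have hq1 := onAC _ qS.
case/setXP: pS; rewrite !inE => uA vA; case/setXP: qS; rewrite !inE => uA' vA'.
simpl in *.
congr pair; apply/permP=> x; case: (boolP (x \in A)) => xA.
- by rewrite -(proj1 (hp1 x)) // -(proj1 (hq1 x)) // e.
- by rewrite (out_perm uA) // (out_perm uA').
- by rewrite (out_perm vA) ?inE ?negbK // (out_perm vA') ?inE ?negbK.
- by rewrite -(proj2 (hp1 x)) // -(proj2 (hq1 x)) // e.
Qed.
End Stab.

Local Open Scope ring_scope.

Lemma prod_nat_bool (R : comNzRingType) (I : finType) (P : pred I) :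
  \prod_i ((P i)%:R : R) = ([forall i, P i])%:R.
Proof.
case: (boolP [forall i, P i]) => [/forallP H|/forallPn [i Pi]].
  by rewrite big1 // => i _; rewrite H.
by rewrite (bigD1 i) //= (negbTE Pi) mul0r.
Qed.

Lemma sum_nat_bool (R : comNzRingType) (I : finType) (P : pred I) :
  \sum_i ((P i)%:R : R) = (#|P|)%:R.
Proof.
rewrite -sum1_card natr_sum [RHS]big_mkcond /=.
by apply: eq_bigr => i _; rewrite unfold_in; case: (P i).
Qed.

Lemma sum_by_card (R : comNzRingType) (G : nat -> R) :
  \sum_(B : {set 'I_4}) G #|B| = \sum_(m < 5) G m * ('C(4, m))%:R.
Proof.
rewrite (partition_big (fun B : {set 'I_4} => (inord #|B| : 'I_5)) predT) //=.
apply: eq_bigr => m _.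
have e : forall B : {set 'I_4}, (inord #|B| == m :> 'I_5) = (#|B| == m).
  move=> B; rewrite -val_eqE /= inordK //.
  by rewrite ltnS (leq_trans (max_card _)) // card_ord.
rewrite (eq_bigl (fun B : {set 'I_4} => #|B| == m)) //.
rewrite (eq_bigr (fun _ => G m)); last by move=> B /eqP ->.
rewrite sumr_const -mulr_natr.
have := card_draws 'I_4 m; rewrite card_ord => <-.
by rewrite mul1r mulr_natr cardsE.
Qed.

Lemma card_setC4 (B : {set 'I_4}) : #|~: B| = (4 - #|B|)%N.
Proof.
have E := cardsC B; rewrite card_ord in E.
apply: (@addnI #|B|); rewrite subnKC; first exact: E.
by apply: (leq_trans (max_card _)); rewrite card_ord.
Qed.

Lemma prod_if_set (R : comNzRingType) (B : {set 'I_4}) (a c : R) :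
  \prod_k (if k \in B then a else c) = a ^+ #|B| * c ^+ (4 - #|B|).
Proof.
rewrite (bigID (mem B)) /=.
rewrite [X in X * _](eq_bigr (fun _ => a)); last by move=> k ->.
rewrite [X in _ * X](eq_bigr (fun _ => c)); last by move=> k kB; rewrite (negbTE kB).
rewrite !prodr_const; congr (_ ^+ _ * _ ^+ _).
have E := cardC (mem B); rewrite card_ord in E.
apply: (@addnI #|B|); rewrite subnKC; first exact: E.
by apply: (leq_trans (max_card _)); rewrite card_ord.
Qed.

Lemma comb (R : comNzRingType) (a c : R) :
  \sum_(s : 'S_4) \sum_(B : {set 'I_4})
     (\prod_k (if k \in B then a else c)) * \prod_k (((s k \in B) == (k \in B))%:R : R)
  = 24%:R * (a ^+ 4 + a ^+ 3 * c + a ^+ 2 * c ^+ 2 + a * c ^+ 3 + c ^+ 4).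
Proof.
rewrite exchange_big /=.
under eq_bigr => B _.
  rewrite -mulr_sumr.
  rewrite [X in _ * X](eq_bigr (fun s : 'S_4 => ([forall k, (s k \in B) == (k \in B)])%:R)); last first.
    by move=> s _; exact: (prod_nat_bool _ (fun k => (s k \in B) == (k \in B))).
  rewrite (sum_nat_bool _ (fun s : 'S_4 => [forall k, (s k \in B) == (k \in B)])).
  have -> : #|[pred s : 'S_4 | [forall k, (s k \in B) == (k \in B)]]| = (#|B|`! * (4 - #|B|)`!)%N.
    have := card_pstab B; rewrite /pstab cardsE => ->.
    by rewrite card_setC4.
  rewrite prod_if_set.
  over.
apply: etrans; first exact: (sum_by_card (fun m => a ^+ m * c ^+ (4 - m) * ((m`! * (4 - m)`!)%:R))).
rewrite (eq_bigr (fun m : 'I_5 => 24%:R * (a ^+ m * c ^+ (4 - m)))); last first.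
  move=> m _; rewrite -mulrA -natrM mulnC bin_fact; last by rewrite -ltnS ltn_ord.
  by rewrite mulrC.
rewrite -mulr_sumr; congr (_ * _).
rewrite !big_ord_recr big_ord0 /=.
have -> : (4 - 1 = 3)%N by []. have -> : (4 - 2 = 2)%N by []. have -> : (4 - 3 = 1)%N by [].
rewrite subn0 subnn.
ring.
Qed.



Section T1.
Variable C : numClosedFieldType.
Variable d : nat.
Variable P : 'M[C]_d.
Variable l : 'rV[C]_d.
Hypothesis PU : P *m (map_mx Num.conj P^T) = 1%:M :> 'M[C]_d.

Let X : 'M[C]_d := map_mx Num.conj P^T *m diag_mx l *m P.

Lemma X_entry p q : X p q = \sum_r (P r p)^* * l 0 r * P r q.
Proof.
rewrite /X mxE; apply: eq_bigr => r _.
by rewrite mul_mx_diag !mxE.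
Qed.

Lemma PU_entry a b : \sum_p (P a p) * (P b p)^* = (a == b)%:R.
Proof.
have := congr1 (fun M : 'M[C]_d => M a b) PU; rewrite !mxE => <-.
by apply: eq_bigr => p _; rewrite !mxE.
Qed.

Lemma T1 : trPSym4X4 X =
  (4`!%:R)^-1 * \sum_(s : 'S_4) \sum_(R : mi d)
     (\prod_k l 0 (R k)) * \prod_k ((R (s k) == R k)%:R : C).
Proof.
rewrite /trPSym4X4 /tr4 /PSym4 /permop /tensor4.
under eq_bigr => i _ do under eq_bigr => j _ do rewrite -mulrA.
under eq_bigr => i _ do rewrite -mulr_sumr.
rewrite -mulr_sumr; congr (_ * _).
under eq_bigr => i _ do under eq_bigr => j _ do rewrite mulr_suml.
under eq_bigr => i _ do rewrite exchange_big /=.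
rewrite exchange_big /=; apply: eq_bigr => s _.
rewrite exchange_big /=.
transitivity (\sum_(j : mi d) \prod_k X (j k) (j ((s^-1)%g k))).
  apply: eq_bigr => j _.
  rewrite (bigD1 [ffun k => j ((s^-1)%g k)]) //= eqxx mul1r [X in _ + X]big1 ?addr0.
    by apply: eq_bigr => k _; rewrite ffunE.
  by move=> i /negbTE ->; rewrite mul0r.
under eq_bigr => j _.
  under eq_bigr => k _ do rewrite X_entry.
  rewrite bigA_distr_bigA /=.
  over.
rewrite exchange_big /=; apply: eq_bigr => R _.
under eq_bigr => j _.
  rewrite big_split big_split /= [X in X * _]mulrC -mulrA.
  rewrite [X in _ * (_ * X)](reindex_perm s) /=.
  rewrite [X in _ * (_ * X)](eq_bigr (fun k => P (R (s k)) (j k))); last by move=> k _; rewrite permK.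
  rewrite -big_split /=.
  over.
rewrite -mulr_sumr; congr (_ * _).
rewrite -(bigA_distr_bigA (fun k p => (P (R k) p)^* * P (R (s k)) p)) /=.
apply: eq_bigr => k _.
rewrite -PU_entry; apply: eq_bigr => p _; exact: mulrC.
Qed.
End T1.

Section T2.
Variable C : numClosedFieldType.
Variable d : nat.
Variable l : 'rV[C]_d.
Variables i0 i1 : 'I_d.
Hypothesis i01 : i0 != i1.
Hypothesis hl : forall i, i != i0 -> i != i1 -> l 0 i = 0.

Lemma T2 (s : 'S_4) :
  \sum_(R : mi d) (\prod_k l 0 (R k)) * \prod_k ((R (s k) == R k)%:R : C)
  = \sum_(B : {set 'I_4}) (\prod_k (if k \in B then l 0 i0 else l 0 i1))
        * \prod_k (((s k \in B) == (k \in B))%:R : C).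
Proof.
pose Pr (R : mi d) := [forall k, (R k == i0) || (R k == i1)].
rewrite (bigID Pr) /= [X in _ + X]big1 ?addr0; last first.
  move=> R /forallPn [k]; rewrite negb_or => /andP [h0 h1].
  by rewrite (bigD1 k) //= hl // !mul0r.
pose g (B : {set 'I_4}) : mi d := [ffun k => if k \in B then i0 else i1].
pose h (R : mi d) : {set 'I_4} := [set k | R k == i0].
rewrite (reindex_onto g h); last first.
  move=> R /forallP HR; apply/ffunP => k; rewrite !ffunE inE.
  by case: (orP (HR k)) => /eqP ->; rewrite ?eqxx // eq_sym (negbTE i01).
have gk : forall B k, (g B k == i0) = (k \in B).
  by move=> B k; rewrite ffunE; case: (k \in B); rewrite ?eqxx // eq_sym (negbTE i01).
apply: eq_big => [B | B _].
  apply/andP; split.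
    by apply/forallP => k; rewrite ffunE; case: (k \in B); rewrite eqxx ?orbT.
  by apply/eqP/setP => k; rewrite inE gk.
congr (_ * _); apply: eq_bigr => k _.
  by rewrite ffunE; case: (k \in B).
rewrite !ffunE; case: (s k \in B); case: (k \in B) => //=;
  rewrite ?eqxx //; case: eqP => // e; have := i01; by rewrite e eqxx.
Qed.
End T2.



Lemma rank_diag (F : fieldType) n (l : 'rV[F]_n) :
  \rank (diag_mx l) = (\sum_i nat_of_bool (l 0%R i != 0%R))%N.
Proof.
elim: n l => [|n IH] l.
  by rewrite big_ord0 flatmx0 mxrank0.
move: l; change (forall l : 'rV[F]_(1 + n), \rank (diag_mx l) =
  (\sum_(i < 1 + n) nat_of_bool (l 0%R i != 0%R))%N) => l.
rewrite -[l]hsubmxK.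
rewrite diag_mx_row rank_diag_block_mx IH big_split_ord /=.
congr (_ + _)%N; last by apply: eq_bigr => i _; rewrite row_mxEr.
rewrite big_ord1 row_mxEl rank_rV.
congr (nat_of_bool _).
apply/idP/idP; apply: contra => /eqP H.
  apply/eqP/matrixP => i j; rewrite !ord1 !mxE eqxx mulr1n.
  by rewrite mxE in H; exact: H.
by move: (congr1 (fun M : 'M_1 => M 0 0) H); rewrite !mxE eqxx mulr1n => ->.
Qed.

Lemma two_support (F : fieldType) n (l : 'rV[F]_n) :
  (\sum_i nat_of_bool (l 0%R i != 0%R))%N = 2%N ->
  exists i0 i1, [/\ i0 != i1, l 0 i0 != 0, l 0 i1 != 0 &
      forall i, i != i0 -> i != i1 -> l 0 i = 0].
Proof.
move=> H.
have [i0 h0] : exists i0, l 0 i0 != 0.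
  apply/existsP; apply: contraT => /existsPn Hn.
  by move: H; rewrite big1 // => i _; rewrite (negbTE (Hn i)).
move: H; rewrite (bigD1 i0) //= h0 add1n => /eqP; rewrite eqSS => /eqP H.
have [i1 /andP [n10 h1]] : exists i1, (i1 != i0) && (l 0 i1 != 0).
  apply/existsP; apply: contraT => /existsPn Hn.
  move: H; rewrite big1 // => i ii0; have := Hn i; rewrite ii0 /= => /negbNE /eqP ->.
  by rewrite eqxx.
move: H; rewrite (bigD1 i1) //= h1 add1n => /eqP; rewrite eqSS sum_nat_eq0 => /forallP H.
exists i0, i1; split=> //; first by rewrite eq_sym.
move=> i a b; apply/eqP; apply: contraT => hn.
by move: (H i); rewrite a b hn.
Qed.



Lemma final_ineq (C : numClosedFieldType) (a c : C) :
  a \is Num.real -> c \is Num.real -> a != 0 -> c != 0 ->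
  let L := 24%:R * (`|a| + `|c|) ^+ 2 *
       (a ^+ 4 + a ^+ 3 * c + a ^+ 2 * c ^+ 2 + a * c ^+ 3 + c ^+ 4) /
       ((a ^+ 2 + c ^+ 2) + (a + c) ^+ 2) ^+ 3 in
  L <= 5%:R / 81%:R * (95%:R + 32%:R * sqrtC 10%:R) /\ (a + c = 0 -> L = 12%:R).
Proof.
move=> ha hc a0 c0 L.
set r := sqrtC 10%:R.
have hr0 : 0 <= r by rewrite sqrtC_ge0 ler0n.
have hr2 : r ^+ 2 = 10%:R by rewrite sqrtCK.
set q := a ^+ 2 + a * c + c ^+ 2.
have sq0 : forall x : C, x \is Num.real -> 0 <= x ^+ 2.
  by move=> x hx; apply: real_exprn_even_ge0.
have hq : 0 < q.
  have h4q : 0 < 4%:R * q.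
    have -> : 4%:R * q = (2%:R * a + c) ^+ 2 + 3%:R * c ^+ 2 by rewrite /q; ring.
    apply: ltr_wpDl; first by apply: sq0; rewrite realD // realM // ger0_real // ler0n.
    by rewrite mulr_gt0 ?ltr0n // real_exprn_even_gt0.
  by move: h4q; rewrite pmulr_rgt0 // ltr0n.
have hD : (a ^+ 2 + c ^+ 2) + (a + c) ^+ 2 = 2%:R * q by rewrite /q; ring.
have hS : (`|a| + `|c|) ^+ 2 = a ^+ 2 + c ^+ 2 + 2%:R * `|a * c|.
  by rewrite sqrrD !real_normK // normrM; ring.
split.
  rewrite /L hD ler_pdivrMr; last by rewrite exprn_gt0 // mulr_gt0 // ltr0n.
  rewrite -subr_ge0 hS.
  have hac := realM ha hc.
  case: (real_ge0P hac) => hac0.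
    idtac.
    have -> : 5%:R / 81%:R * (95%:R + 32%:R * r) * (2%:R * q) ^+ 3 -
      24%:R * (a ^+ 2 + c ^+ 2 + 2%:R * (a * c)) *
      (a ^+ 4 + a ^+ 3 * c + a ^+ 2 * c ^+ 2 + a * c ^+ 3 + c ^+ 4) =
      8%:R / 81%:R * ((151%:R + 160%:R * r) * q ^+ 3 +
         81%:R * ((a - c) ^+ 2 * q ^+ 2 + 3%:R * (a + c) ^+ 4 * (a * c))).
      by rewrite /q; field.
    apply: mulr_ge0; first by rewrite divr_ge0 ?ler0n.
    apply: addr_ge0.
      by apply: mulr_ge0; [apply: addr_ge0; [rewrite ler0n | apply: mulr_ge0; rewrite ?ler0n] | apply: exprn_ge0; apply: ltW].
    apply: mulr_ge0; first by rewrite ler0n.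
    apply: addr_ge0.
      by apply: mulr_ge0; [apply: sq0; rewrite realB | apply: exprn_ge0; apply: ltW].
    apply: mulr_ge0 => //; apply: mulr_ge0; first by rewrite ler0n.
    by rewrite -[4%N]/(2 * 2)%N exprM; apply: sq0; apply: realX; rewrite realD.
  idtac.
  set s := a - c; set m := - (a * c).
  have hm : 0 <= m by rewrite /m oppr_ge0 ltW.
  have hsm : 0 <= s ^+ 2 - 4%:R * m.
    have -> : s ^+ 2 - 4%:R * m = (a + c) ^+ 2 by rewrite /s /m; ring.
    by apply: sq0; rewrite realD.
  have -> : 5%:R / 81%:R * (95%:R + 32%:R * r) * (2%:R * q) ^+ 3 -
      24%:R * (a ^+ 2 + c ^+ 2 + 2%:R * - (a * c)) *
      (a ^+ 4 + a ^+ 3 * c + a ^+ 2 * c ^+ 2 + a * c ^+ 3 + c ^+ 4) =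
      8%:R / 81%:R * ((475%:R + 160%:R * r) * (s ^+ 2 - 3%:R * m) ^+ 3 -
        243%:R * s ^+ 2 * (s ^+ 4 - 5%:R * s ^+ 2 * m + 5%:R * m ^+ 2)).
    by rewrite /q /s /m; field.
  set W := 15%:R * m - 10%:R * s ^+ 2.
  set V := 2%:R * s ^+ 2.
  set L0 := 670%:R * s ^+ 2 - 1425%:R * m.
  set L1 := 220%:R * s ^+ 2 - 480%:R * m.
  have key : 25%:R * ((475%:R + 160%:R * r) * (s ^+ 2 - 3%:R * m) ^+ 3 -
        243%:R * s ^+ 2 * (s ^+ 4 - 5%:R * s ^+ 2 * m + 5%:R * m ^+ 2)) =
      (W + r * V) ^+ 2 * (L0 + r * L1)
      - (r ^+ 2 - 10%:R) * (2%:R * W * V * L1 + V ^+ 2 * L0 + r * V ^+ 2 * L1).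
    by rewrite /W /V /L0 /L1; ring.
  rewrite hr2 subrr mul0r subr0 in key.
  apply: mulr_ge0; first by rewrite divr_ge0 ?ler0n.
  rewrite -(pmulr_rge0 _ (ltr0n C 25)) key.
  have hrR : r \is Num.real by apply: ger0_real.
  have hsR : s \is Num.real by rewrite realB.
  have hmR : m \is Num.real by rewrite realN // realM.
  apply: mulr_ge0.
    apply: sq0; rewrite realD // /W /V ?realM ?realB ?realD ?realX // ?realM //.
  have -> : L0 + r * L1 = (670%:R + 220%:R * r) * (s ^+ 2 - 4%:R * m)
      + (1255%:R + 400%:R * r) * m by rewrite /L0 /L1; ring.
  apply: addr_ge0; apply: mulr_ge0 => //;
    by apply: addr_ge0; rewrite ?ler0n // mulr_ge0 ?ler0n.
move=> hac.
have ec : c = - a by apply/eqP; rewrite -(subr_eq0) opprK addrC hac.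
rewrite /L ec normrN.
have -> : (`|a| + `|a|) ^+ 2 = 4%:R * a ^+ 2.
  by rewrite -(real_normK ha); ring.
field.
rewrite subrr expr0n /= addr0 sqrrN -mulr2n mulrn_eq0 /= expf_eq0 /=.
exact: a0.
Qed.

Local Open Scope ring_scope.

Lemma char_poly_conj (F : fieldType) n (Q A : 'M[F]_n) : Q \in unitmx ->
  char_poly (invmx Q *m A *m Q) = char_poly A.
Proof.
move=> Qu; rewrite /char_poly /char_poly_mx.
have -> : 'X%:M - map_mx polyC (invmx Q *m A *m Q) =
   map_mx polyC (invmx Q) *m ('X%:M - map_mx polyC A) *m map_mx polyC Q.
  rewrite mulmxBr mulmxBl !map_mxM; congr (_ - _).
  rewrite mul_mx_scalar -scalemxAl -map_mxM mulVmx // map_mx1.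
  by rewrite scalemx1.
rewrite !det_mulmx mulrAC -det_mulmx -map_mxM mulVmx // map_mx1 det1 mul1r.
by [].
Qed.

Lemma char_poly_diag (F : fieldType) n (l : 'rV[F]_n) :
  char_poly (diag_mx l) = \prod_i ('X - (l 0 i)%:P).
Proof.
rewrite char_poly_trig ?diag_mx_is_trig //.
by apply: eq_bigr => i _; rewrite mxE eqxx mulr1n.
Qed.

Lemma sum_two (R : nmodType) n (i0 i1 : 'I_n) (F : 'I_n -> R) : i0 != i1 ->
  (forall i, i != i0 -> i != i1 -> F i = 0) -> \sum_i F i = F i0 + F i1.
Proof.
move=> n01 H; rewrite (bigD1 i0) //= (bigD1 i1) /=; last by rewrite eq_sym.
rewrite big1 ?addr0 // => i /andP [a b]; exact: H.
Qed.

Local Open Scope ring_scope.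

Theorem mainTheorem10 (C : numClosedFieldType) (d : nat) (X : 'M[C]_d) :
  X \is hermsymmx -> \rank X = 2%N ->
  let LHS := 24%:R * trace_norm X ^+ 2 * trPSym4X4 X /
             (hs_norm X ^+ 2 + \tr X ^+ 2) ^+ 3 in
  LHS <= 5%:R / 81%:R * (95%:R + 32%:R * sqrtC 10%:R)
  /\ (\tr X = 0 -> LHS = 12%:R).
Proof.
move=> hX hrank LHS.
have hN : X \is normalmx := hermitian_normalmx hX.
set P := spectralmx X; set lam := spectral_diag X.
have XE : X = invmx P *m diag_mx lam *m P := elimT (@orthomx_spectralP C d X) hN.
have PUn : P \is unitarymx := spectral_unitarymx X.
have Pu : P \in unitmx := unitarymx_unit PUn.
have PU : P *m map_mx Num.conj P^T = 1%:M := unitarymxP PUn.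
have lamR : forall i, lam 0 i \is Num.real.
  by move=> i; apply: (mxOverP (hermitian_spectral_diag_real hX)).
have hr : (\sum_i nat_of_bool (lam 0%R i != 0%R))%N = 2%N.
  rewrite -rank_diag -hrank XE mxrankMfree ?row_free_unit //.
  by rewrite (eqmxMfull _ _) // row_full_unit unitmx_inv.
have [i0 [i1 [i01 a0 c0 hl]]] := two_support hr.
rewrite invmx_unitary // in XE.
set Pa := map_mx Num.conj P^T in XE PU.
have trc : forall M : 'M[C]_d, \tr (Pa *m M *m P) = \tr M.
  by move=> M; rewrite mxtrace_mulC mulmxA PU mul1mx.
set a := lam 0 i0; set c := lam 0 i1.
have htr : \tr X = a + c.
  by rewrite XE trc mxtrace_diag (@sum_two _ _ i0 i1 (fun i => lam 0 i) i01 hl).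
have /is_hermitianmxP hX' := hX.
rewrite expr0 scale1r in hX'.
have adjX : adjmx X = X by rewrite /adjmx map_trmx -hX'.
set lam2 := \row_i (lam 0 i ^+ 2).
have DD : diag_mx lam *m diag_mx lam = diag_mx lam2.
  by apply/matrixP=> i j; rewrite mul_diag_mx !mxE mulrnAr expr2.
have XX : X *m X = Pa *m diag_mx lam2 *m P.
  rewrite XE !mulmxA -[Pa *m diag_mx lam *m P *m Pa]mulmxA PU mulmx1.
  by rewrite -[Pa *m _ *m diag_mx lam]mulmxA DD.
have hl2 : forall i, i != i0 -> i != i1 -> lam2 0 i = 0.
  by move=> i h0 h1; rewrite mxE hl // expr0n.
have hhs : hs_norm X ^+ 2 = a ^+ 2 + c ^+ 2.
  rewrite /hs_norm sqrtCK adjX XX trc mxtrace_diag.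
  by rewrite (@sum_two _ _ i0 i1 (fun i => lam2 0 i) i01 hl2) !mxE.
have XXn : X *m X \is normalmx.
  apply/orthomx_spectral_subproof; exists (P, lam2) => //=.
  by rewrite XX /Pa invmx_unitary.
have XXE := elimT (@orthomx_spectralP C d (X *m X)) XXn.
set Q := spectralmx (X *m X) in XXE; set mu := spectral_diag (X *m X) in XXE.
have Qu : Q \in unitmx := unitarymx_unit (spectral_unitarymx (X *m X)).
have hcp : \prod_i ('X - (mu 0 i)%:P) = \prod_i ('X - (lam2 0 i)%:P).
  rewrite -!char_poly_diag -(char_poly_conj _ Qu) -XXE XX /Pa -(invmx_unitary PUn).
  exact: char_poly_conj.
have E : forall f : 'I_d -> C, \prod_i ('X - (f i)%:P) =
    \prod_(x <- map f (enum 'I_d)) ('X - x%:P).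
  by move=> f; rewrite big_map big_enum.
rewrite !E in hcp.
have pe := prod_XsubC_eq hcp.
have sq : forall x : C, x \is Num.real -> sqrtC (x ^+ 2) = `|x|.
  move=> x xR; rewrite normC_def; congr sqrtC.
  by rewrite expr2; congr (_ * _); apply/esym/eqP; rewrite -CrealE.
have htn : trace_norm X = `|a| + `|c|.
  rewrite /trace_norm adjX -/mu.
  have E2 : forall f : 'I_d -> C, \sum_i sqrtC (f i) = \sum_(x <- map f (enum 'I_d)) sqrtC x.
    by move=> f; rewrite big_map big_enum.
  rewrite (E2 (fun i => mu 0 i)) (perm_big _ pe) -E2.
  rewrite (@sum_two _ _ i0 i1 (fun i => sqrtC (lam2 0 i)) i01); last first.
    by move=> i h0 h1; rewrite hl2 // sqrtC0.
  by rewrite !mxE !sq.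
have htp : trPSym4X4 X = a ^+ 4 + a ^+ 3 * c + a ^+ 2 * c ^+ 2 + a * c ^+ 3 + c ^+ 4.
  rewrite XE /Pa (@T1 _ _ P lam PU).
  under eq_bigr => s _ do rewrite (T2 i01 hl s).
  rewrite comb.
  have -> : (4`! = 24)%N by [].
  by rewrite mulKf // pnatr_eq0.
have := final_ineq (lamR i0) (lamR i1) a0 c0.
rewrite /LHS htn htp hhs htr /=.
move=> [H1 H2]; split => //.
Qed.
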